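(* Let $\mathbf a=(a_1,\dots,a_q)$ be a graceful permutation of length $q$ and let $p$ be an even integer with $2(q-1)/3<p<2q$. Then either $\mathbf a$ or its complement $\bar{\mathbf a}=(q-1-a_1,\dots,q-1-a_q)$ has two adjacent entries $x$ and $y$ (in either order) with $x<y<2(y-x)=p$.
   Context: A graceful permutation of length $n$ is an arrangement $(a_1,\dots,a_n)$ of the integers $\{0,1,\dots,n-1\}$ whose absolute differences $|a_{i+1}-a_i|$ ($1\le i\le n-1$) are exactly $\{1,\dots,n-1\}$. *)

(* Defs.v *)
From mathcomp Require Import all_boot.
Set Implicit Arguments. Unset Strict Implicit. Unset Printing Implicit Defensive.

Definition absdiff (m n : nat) : nat := (m - n) + (n - m).

Definition diffs (s : seq nat) : seq nat :=
  [seq absdiff xy.2 xy.1 | xy <- zip s (behead s)].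

Definition graceful (s : seq nat) : Prop :=
  perm_eq s (iota 0 (size s)) /\ perm_eq (diffs s) (iota 1 (size s).-1).

Definition complement (q : nat) (s : seq nat) : seq nat :=
  [seq (q - 1 - x) | x <- s].

Definition has_adj_pair (p : nat) (s : seq nat) : Prop :=
  exists i, i.+1 < size s /\
    exists x y,
      ((x = nth 0 s i /\ y = nth 0 s i.+1) \/ (y = nth 0 s i /\ x = nth 0 s i.+1))
      /\ x < y /\ y < 2 * (y - x) /\ 2 * (y - x) = p.

(* Main.v *)
Require Import Defs.
From mathcomp Require Import all_boot.
From mathcomp Require Import zify.

Theorem lemma5p8 (q p : nat) (a : seq nat) :
  size a = q -> graceful a ->
  ~~ odd p -> 2 * (q - 1) < 3 * p -> p < 2 * q ->
  has_adj_pair p a \/ has_adj_pair p (complement q a).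
Proof.
move=> Hs [Hp Hd] Hodd H1 H2.
have Hpd : p = 2 * p./2 by rewrite -[p in LHS]odd_double_half (negbTE Hodd) add0n -muln2 mulnC.
set d := p./2 in Hpd.
have dmem : d \in diffs a by rewrite (perm_mem Hd) mem_iota; lia.
have [i Hi Hnth] : exists2 i, i < size (diffs a) & nth 0 (diffs a) i = d.
  by exists (index d (diffs a)); [rewrite index_mem | rewrite nth_index].
have Hsz : size (diffs a) = (size a).-1.
  by rewrite /diffs size_map size_zip size_behead; lia.
rewrite Hsz in Hi.
have Hzi : i < size (zip a (behead a)) by rewrite size_zip size_behead; lia.
move: Hnth; rewrite /diffs (nth_map (0,0)) // nth_zip_cond Hzi /= nth_behead => Hab.
have lt k : k < size a -> nth 0 a k < q.
  move=> Hk; have : nth 0 a k \in a by apply: mem_nth.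
  by rewrite (perm_mem Hp) mem_iota; lia.
have Lu := lt i ltac:(lia). have Lv := lt i.+1 ltac:(lia).
move: Hab; rewrite /absdiff => Hab.
have Hci : forall k, k < size a -> nth 0 (complement q a) k = q - 1 - nth 0 a k.
  by move=> k Hk; rewrite /complement (nth_map 0).
have Hcs : size (complement q a) = size a by rewrite size_map.
set u := nth 0 a i in Hab Lu Hci. set v := nth 0 a i.+1 in Hab Lv Hci.
case: (ltnP (minn u v) d) => Hm.
- left; exists i; split; first lia.
  case: (leqP u v) => Huv.
  + exists u, v; split; first by left. lia.
  + exists v, u; split; first by right. lia.
- right; exists i; split; first lia.
  rewrite !Hci; try lia.
  case: (leqP u v) => Huv.
  + exists (q - 1 - v), (q - 1 - u); split; first by right. lia.
  + exists (q - 1 - u), (q - 1 - v); split; first by left. lia.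
Qed.
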